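(* Let $(w_i)_{i\in[n]}$ be positive weights, $W_n=w_I$ with $I$ uniform on $[n]$, and consider the measure on $\{-1,1\}^n$ $$\mu_n(\sigma)=\frac{1}{Z_n}\exp\Big(\frac{\beta}{2n\mathbb E[W_n]}\Big(\sum_{i}w_i\sigma_i\Big)^2+h\sum_i\sigma_i\Big).$$ Define $$G_n(x;s)=\frac{x^2}{2}-\mathbb E\Big[\log\cosh\Big(\sqrt{\tfrac{\beta}{\mathbb E[W_n]}}W_n(x+s)+h\Big)\Big],\qquad G_n(x)=G_n(x;0).$$ Let $x_n^*$ be the solution with the same sign as $h$ (with $x_n^*=0$ when $h=0$) of $x=\mathbb E\big[\tanh\big(\sqrt{\beta/\mathbb E[W_n]}W_nx+h\big)\sqrt{\beta/\mathbb E[W_n]}W_n\big]$, write $T_n=\tanh(\sqrt{\beta/\mathbb E[W_n]}W_nx_n^*+h)$ and set $$M_n=\mathbb E[T_n],\quad \sigma^2=\frac{1}{G_n''(x_n^* )},\quad \chi_n=1-\mathbb E[T_n^2]+\frac{\frac{\beta}{\mathbb E[W_n]}\mathbb E[(1-T_n^2)W_n]^2}{1-\frac{\beta}{\mathbb E[W_n]}\mathbb E[(1-T_n^2)W_n^2]},$$ $$\tilde M_n=\sqrt{\tfrac{\mathbb E[W_n]}{\beta}}x_n^*,\qquad \tilde\chi_n=\sigma^2\,\mathbb E[(1-T_n^2)W_n^2].$$ Let $\sigma\sim\mu_n$, $m_n=\frac1n\sum_i\sigma_i$, $\tilde m_n=\frac1n\sum_iw_i\sigma_i$, $\tilde m_n^i=\frac1n\sum_{j\neq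 i}w_j\sigma_j$, and $$X_n=\sqrt n\frac{m_n-M_n}{\sqrt{\chi_n}},\qquad \tilde X_n=\sqrt n\frac{\tilde m_n-\tilde M_n}{\sqrt{\tilde\chi_n}}.$$ Let $I$ be uniform on $[n]$ independent of $\sigma$, let $\sigma_I'$ be drawn from the conditional distribution (under $\mu_n$) of $\sigma_I$ given $(\sigma_j)_{j\neq I}$, and set $$X_n'=X_n-\frac{\sigma_I-\sigma_I'}{\sqrt n\sqrt{\chi_n}},\qquad \tilde X_n'=\tilde X_n-\frac{w_I(\sigma_I-\sigma_I')}{\sqrt n\sqrt{\tilde\chi_n}}.$$ Let $\mathcal F_n$ be the $\sigma$-algebra generated by $(\sigma_i)_{i\in[n]}$. Let $\lambda=1/n$, $$c=\frac{\sqrt{\tilde\chi_n}}{\sqrt{\chi_n}}\frac{\beta}{\mathbb E[W_n]}\mathbb E[(1-T_n^2)W_n],$$ and $$R_1=\frac{\sqrt n}{\sqrt{\chi_n}}\frac1n\sum_{i}\Big(\tanh\big(\tfrac{\beta w_i}{\mathbb E[W_n]}\tilde m_n+h\big)-\tanh\big(\tfrac{\beta w_i}{\mathbb E[W_n]}\tilde m_n^i+h\big)\Big),$$ $$R_2=\frac{\sqrt n}{\sqrt{\chi_n}}\frac1n\sum_i\Big(\tanh\big(\sqrt{\tfrac{\beta}{\mathbb E[W_n]}}w_ix_n^*+h\big)-\tanh\big(\tfrac{\beta w_i}{\mathbb E[W_n]}\tilde m_n+h\big)\Big)+c\tilde X_n,$$ $$\tilde R_1=\frac{\sqrt n}{\sqrt{\tilde\chi_n}}\frac1n\sum_iw_i\Big(\tanh\big(\tfrac{\beta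 w_i}{\mathbb E[W_n]}\tilde m_n+h\big)-\tanh\big(\tfrac{\beta w_i}{\mathbb E[W_n]}\tilde m_n^i+h\big)\Big),$$ $$\tilde R_2=\frac{\sqrt n}{\sqrt{\tilde\chi_n}}\sqrt{\tfrac{\mathbb E[W_n]}{\beta}}\,G_n'\Big(\sqrt{\tfrac{\beta}{\mathbb E[W_n]}}\tilde m_n\Big)-\frac{1}{\sigma^2}\tilde X_n.$$ Then, for $(\beta,h)\in\mathcal U=\{(\beta,h):\beta\ge0,h\ne0\}\cup\{(\beta,0):0<\beta<\beta_c\}$ (where $\beta_c=\mathbb E[W]/\mathbb E[W^2]$), $$\mathbb E\left[\begin{pmatrix}X_n-X_n'\\ \tilde X_n-\tilde X_n'\end{pmatrix}\,\Big|\,\mathcal F_n\right]=\lambda\begin{pmatrix}1&-c\\0&1/\sigma^2\end{pmatrix}\begin{pmatrix}X_n\\ \tilde X_n\end{pmatrix}+\lambda\begin{pmatrix}R_1+R_2\\ \tilde R_1+\tilde R_2\end{pmatrix}.$$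
   Context: $\mathbb E[f(W_n)]$ means $\frac1n\sum_if(w_i)$. $W$ is the distributional limit of $W_n$ from the weight regularity assumptions ($W_n\to W$ in distribution, $\mathbb E[W_n^2]\to\mathbb E[W^2]<\infty$, $\mathbb E[W]>0$), used only to define $\beta_c$ and the regime $\mathcal U$. *)

(* Defs.v *)
From HB Require Import structures.
From mathcomp Require Import all_boot all_order all_algebra.
From mathcomp Require Import all_classical all_reals all_analysis.
Set Implicit Arguments. Unset Strict Implicit. Unset Printing Implicit Defensive.
Import Order.TTheory GRing.Theory Num.Theory.
Import numFieldNormedType.Exports.
Local Open Scope ring_scope.
Local Open Scope classical_set_scope.

Section CurieWeiss.
Variable R : realType.

Definition cosh (x : R) : R := (expR x + expR (- x)) / 2.
Definition tanh (x : R) : R := (expR x - expR (- x)) / (expR x + expR (- x)).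

Variable n : nat.
Variable w : 'I_n -> R.

Definition EWn (f : R -> R) : R := (\sum_(i < n) f (w i)) / n%:R.
Definition EW : R := EWn id.

(* spin configurations sigma in {-1,1}^n, encoded by booleans *)
Definition config := {ffun 'I_n -> bool}.
Definition spin (b : bool) : R := if b then 1 else -1.

Variables beta h : R.

Definition hamil (s : config) : R :=
  beta / (2 * n%:R * EW) * (\sum_(i < n) w i * spin (s i)) ^+ 2
  + h * \sum_(i < n) spin (s i).

Definition Zn : R := \sum_(s : config) expR (hamil s).
Definition mun (s : config) : R := expR (hamil s) / Zn.

Definition setspin (s : config) (i : 'I_n) (b : bool) : config :=
  [ffun j => if j == i then b else s j].

(* conditional law under mu_n of sigma_i given (sigma_j)_{j<>i} *)
Definition condspin (s : config) (i : 'I_n) (b : bool) : R :=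
  mun (setspin s i b) / (mun (setspin s i true) + mun (setspin s i false)).

(* joint law of (sigma, I, sigma'_I): sigma ~ mu_n, I uniform independent,
   sigma'_I drawn from the conditional law of sigma_I given the others *)
Definition jointlaw (s : config) (i : 'I_n) (b : bool) : R :=
  mun s * (1 / n%:R) * condspin s i b.

(* conditional expectation given F_n = sigma(sigma_1..sigma_n), evaluated at
   the atom {sigma = s}, of a random variable F(sigma, I, sigma'_I) *)
Definition condexpF (F : config -> 'I_n -> bool -> R) (s : config) : R :=
  (\sum_(i < n) \sum_(b : bool) jointlaw s i b * F s i b)
  / (\sum_(i < n) \sum_(b : bool) jointlaw s i b).

Definition mag (s : config) : R := (\sum_(i < n) spin (s i)) / n%:R.
Definition wmag (s : config) : R := (\sum_(i < n) w i * spin (s i)) / n%:R.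
Definition wmag_i (s : config) (i : 'I_n) : R :=
  (\sum_(j < n | j != i) w j * spin (s j)) / n%:R.

Definition kappa : R := Num.sqrt (beta / EW).

Definition Gns (x s : R) : R :=
  x ^+ 2 / 2 - EWn (fun y => ln (cosh (kappa * y * (x + s) + h))).
Definition Gn (x : R) : R := Gns x 0.

Variable xs : R.

Definition Tn (y : R) : R := tanh (kappa * y * xs + h).
Definition Mn : R := EWn Tn.
Definition sigma2 : R := 1 / (derive1n 2 Gn xs).
Definition chin : R :=
  1 - EWn (fun y => Tn y ^+ 2)
  + (beta / EW) * (EWn (fun y => (1 - Tn y ^+ 2) * y)) ^+ 2
    / (1 - (beta / EW) * EWn (fun y => (1 - Tn y ^+ 2) * y ^+ 2)).
Definition tMn : R := Num.sqrt (EW / beta) * xs.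
Definition tchin : R := sigma2 * EWn (fun y => (1 - Tn y ^+ 2) * y ^+ 2).

Definition Xn (s : config) : R :=
  Num.sqrt n%:R * (mag s - Mn) / Num.sqrt chin.
Definition tXn (s : config) : R :=
  Num.sqrt n%:R * (wmag s - tMn) / Num.sqrt tchin.
Definition Xn' (s : config) (i : 'I_n) (b : bool) : R :=
  Xn s - (spin (s i) - spin b) / (Num.sqrt n%:R * Num.sqrt chin).
Definition tXn' (s : config) (i : 'I_n) (b : bool) : R :=
  tXn s - w i * (spin (s i) - spin b) / (Num.sqrt n%:R * Num.sqrt tchin).

Definition lambda : R := 1 / n%:R.
Definition cc : R :=
  Num.sqrt tchin / Num.sqrt chin * (beta / EW) * EWn (fun y => (1 - Tn y ^+ 2) * y).

Definition R1 (s : config) : R :=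
  Num.sqrt n%:R / Num.sqrt chin *
  ((\sum_(i < n) (tanh (beta * w i / EW * wmag s + h)
                 - tanh (beta * w i / EW * wmag_i s i + h))) / n%:R).
Definition R2 (s : config) : R :=
  Num.sqrt n%:R / Num.sqrt chin *
  ((\sum_(i < n) (tanh (kappa * w i * xs + h)
                 - tanh (beta * w i / EW * wmag s + h))) / n%:R)
  + cc * tXn s.
Definition tR1 (s : config) : R :=
  Num.sqrt n%:R / Num.sqrt tchin *
  ((\sum_(i < n) w i * (tanh (beta * w i / EW * wmag s + h)
                 - tanh (beta * w i / EW * wmag_i s i + h))) / n%:R).
Definition tR2 (s : config) : R :=
  Num.sqrt n%:R / Num.sqrt tchin * Num.sqrt (EW / beta)
    * (derive1 Gn (kappa * wmag s))
  - 1 / sigma2 * tXn s.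

End CurieWeiss.

(* the limit W, given by its law muW on R *)
Section Limit.
Variable R : realType.
Variable muW : probability (measurableTypeR R) R.

Local Open Scope ereal_scope.
Definition EW_lim : R := fine (\int[muW]_x (x%:E)).
Definition EW2_lim : R := fine (\int[muW]_x ((x ^+ 2)%R%:E)).
Local Close Scope ereal_scope.

Definition beta_c : R := EW_lim / EW2_lim.

Definition regimeU (beta h : R) : Prop :=
  (0 <= beta /\ h != 0) \/ (h = 0 /\ 0 < beta /\ beta < beta_c).

Definition weight_regular (w : forall n : nat, 'I_n -> R) : Prop :=
  (forall n (i : 'I_n), 0 < w n i) /\
  (* W_n -> W in distribution *)
  (forall f : R -> R, continuous f -> (exists M : R, forall x, `|f x| <= M) ->
     ((fun n => (EWn (w n) f)%:E) @ \oo --> (\int[muW]_x (f x)%:E)%E)) /\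
  ((fun n => (EWn (w n) (fun y => y ^+ 2))%:E) @ \oo
     --> (\int[muW]_x ((x ^+ 2)%:E))%E) /\
  (\int[muW]_x ((x ^+ 2)%:E) < +oo)%E /\
  (0 < \int[muW]_x (x%:E))%E.

End Limit.

(* Main.v *)
Require Import Defs.
From HB Require Import structures.
From mathcomp Require Import all_boot all_order all_algebra.
From mathcomp Require Import all_classical all_reals all_analysis.
From mathcomp Require Import ring lra.
Import Order.TTheory GRing.Theory Num.Theory.
Local Open Scope ring_scope.
Section H.
Variable R : realType.
Lemma cosh_gt0 (x : R) : 0 < cosh x.
Proof. rewrite /cosh; apply: divr_gt0 => //; apply: addr_gt0; exact: expR_gt0. Qed.
Lemma t1 (a b x : R) : is_derive x 1 (fun x => a * x + b) a.
Proof. apply: is_derive_eq. rewrite addr0; exact: mulr1. Qed.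
Lemma t3 (a b x : R) : is_derive x 1 (fun x => expR (a * x + b)) (expR (a*x+b) * a).
Proof. apply: (@is_derive1_comp R expR (fun x => a * x + b)); exact: t1. Qed.
Lemma t4 (a b x : R) : is_derive x 1 (fun x => cosh (a * x + b)) ((expR (a*x+b) - expR (-(a*x+b))) / 2 * a).
Proof.
have h3 := t3 (-a) (-b) x.
have h2 := t3 a b x.
have e : (fun x => cosh (a * x + b)) = (2^-1 \*: ((fun x => expR (a * x + b)) + (fun x => expR ((-a) * x + -b)))).
  apply/funext => y /=. rewrite /cosh /GRing.scale /= mulrC; congr (_ * _); congr (_ + _); congr expR. ring.
rewrite e.
apply: is_derive_eq.
rewrite /GRing.scale /=; have -> : -a*x - b = -(a*x+b) by ring.
ring.
Qed.
Lemma is_derive_lncosh (a b x : R) :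
  is_derive x 1 (fun x => ln (cosh (a * x + b))) (tanh (a * x + b) * a).
Proof.
have H := @is_derive1_comp R (@ln R) (fun x => cosh (a * x + b)) x _ _ (is_derive1_ln (cosh_gt0 (a*x+b))) (t4 a b x).
apply: (is_derive_eq H).
rewrite /tanh /cosh.
have hp : expR (a * x + b) + expR (- (a * x + b)) != 0.
  by rewrite gt_eqF // addr_gt0 // expR_gt0.
field. by rewrite hp.
Qed.
Variable n : nat.
Variable w : 'I_n -> R.
Variables beta h : R.
Lemma derGn (x : R) : derive1 (Gn w beta h) x =
  x - (\sum_(i < n) tanh (kappa w beta * w i * x + h) * (kappa w beta * w i)) / n%:R.
Proof.
set k := kappa w beta.
have e : Gn w beta h = (fun x => x ^+ 2 / 2) - n%:R^-1 \*: \sum_(i < n) (fun x => ln (cosh ((k * w i) * x + h))).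
  apply/funext => y; rewrite /Gn /Gns /EWn fct_sumE !fctE /GRing.scale /= -[_ *: _]/(_ * _) [n%:R^-1 * _]mulrC.
  congr (_ - _ / _); apply: eq_bigr => i _; by rewrite addr0.
rewrite e derive1E.
apply: derive_val.
have hs : is_derive x 1 (\sum_(i < n) (fun x => ln (cosh ((k * w i) * x + h))))
    (\sum_(i < n) (tanh (k * w i * x + h) * (k * w i))).
  by apply: is_derive_sum => i; exact: is_derive_lncosh.
have h2 : is_derive x 1 (fun x0 : R => x0 ^+ 2 / 2) x.
  apply: is_derive_eq.
  rewrite !scaler0 add0r.
  rewrite /GRing.scale /=. by field.
apply: is_derive_eq (is_deriveB h2 (is_deriveZ _ hs)) _.
by rewrite /GRing.scale /= [_^-1 * _]mulrC.
Qed.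
Lemma sum_setspin (F : 'I_n -> bool -> R) (s : config n) i b :
  \sum_(j < n) F j (setspin s i b j) = F i b + \sum_(j < n | j != i) F j (s j).
Proof.
rewrite (bigD1 i) //= ffunE eqxx; congr (_ + _).
by apply: eq_bigr => j hj; rewrite ffunE (negbTE hj).
Qed.

Lemma Zn_gt0 (s : config n) : 0 < Zn w beta h.
Proof.
rewrite /Zn (bigD1 s) //=.
have := expR_gt0 (hamil w beta h s).
have : 0 <= \sum_(i | i != s) expR (hamil w beta h i).
  by apply: sumr_ge0 => t _; exact: expR_ge0.
lra.
Qed.

Lemma condspin_E (s : config n) i b : condspin w beta h s i b =
  expR (hamil w beta h (setspin s i b)) /
  (expR (hamil w beta h (setspin s i true)) + expR (hamil w beta h (setspin s i false))).
Proof.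
rewrite /condspin /mun.
have hZ : Zn w beta h != 0 by rewrite gt_eqF // (Zn_gt0 s).
have hS : expR (hamil w beta h (setspin s i true)) + expR (hamil w beta h (setspin s i false)) != 0.
  by rewrite gt_eqF // addr_gt0 // expR_gt0.
field. by rewrite hS hZ.
Qed.

Lemma sum_cond (s : config n) i : \sum_(b : bool) condspin w beta h s i b = 1.
Proof.
rewrite big_bool /= !condspin_E.
have hS : expR (hamil w beta h (setspin s i true)) + expR (hamil w beta h (setspin s i false)) != 0.
  by rewrite gt_eqF // addr_gt0 // expR_gt0.
by rewrite -mulrDl divff.
Qed.

Lemma condexpF_E F (s : config n) (hn0 : n%:R != 0 :> R) :
  condexpF w beta h F s = (\sum_(i < n) \sum_(b : bool) condspin w beta h s i b * F s i b) / n%:R.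
Proof.
rewrite /condexpF /jointlaw.
have hm : mun w beta h s != 0 by rewrite gt_eqF // /mun divr_gt0 // ?expR_gt0 // (Zn_gt0 s).
have -> : \sum_(i < n) \sum_(b : bool) mun w beta h s * (1 / n%:R) * condspin w beta h s i b * F s i b
  = mun w beta h s * (1 / n%:R) * \sum_(i < n) \sum_(b : bool) condspin w beta h s i b * F s i b.
  rewrite mulr_sumr; apply: eq_bigr => i _; rewrite mulr_sumr; apply: eq_bigr => b _; ring.
have -> : \sum_(i < n) \sum_(b : bool) mun w beta h s * (1 / n%:R) * condspin w beta h s i b
  = mun w beta h s.
  under eq_bigr do rewrite -mulr_sumr sum_cond mulr1.
  rewrite sumr_const card_ord -mulr_natr. field. exact: hn0.
field. by rewrite hm hn0.
Qed.
Lemma key (s : config n) i (hn0 : n%:R != 0 :> R) (hE : EW w != 0) :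
  \sum_(b : bool) condspin w beta h s i b * (spin R (s i) - spin R b)
  = spin R (s i) - tanh (beta * w i / EW w * wmag_i w s i + h).
Proof.
rewrite big_bool /= !condspin_E /wmag_i.
set A := \sum_(j < n | j != i) w j * spin R (s j).
set B := \sum_(j < n | j != i) spin R (s j).
set u := beta * w i / EW w * (A / n%:R) + h.
set P := beta / (2 * n%:R * EW w) * (A ^+ 2 + w i ^+ 2) + h * B.
have eT : hamil w beta h (setspin s i true) = P + u.
  rewrite /hamil (sum_setspin (fun j b => w j * spin R b)) (sum_setspin (fun j b => spin R b)) -/A -/B /P /u /spin.
  field. by rewrite hn0 hE.
have eF : hamil w beta h (setspin s i false) = P - u.
  rewrite /hamil (sum_setspin (fun j b => w j * spin R b)) (sum_setspin (fun j b => spin R b)) -/A -/B /P /u /spin.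
  field. by rewrite hn0 hE.
rewrite eT eF /tanh -/u; clearbody u P; rewrite !expRD.
have h1 : expR P != 0 by rewrite gt_eqF // expR_gt0.
have h2 : expR u + expR (- u) != 0 by rewrite gt_eqF // addr_gt0 // expR_gt0.
have h3 : expR P * expR u + expR P * expR (- u) != 0 by rewrite -mulrDr mulf_neq0.
rewrite /spin /=.
field. by rewrite h2 h3.
Qed.
End H.

Theorem lemma3p1 (R : realType) (muW : probability (measurableTypeR R) R)
  (w : forall n : nat, 'I_n -> R) (hw : weight_regular muW w)
  (beta h : R) (hU : regimeU muW beta h)
  (n : nat) (hn : (0 < n)%N) (xs : R)
  (hfix : xs = EWn (w n) (fun y => tanh (kappa (w n) beta * y * xs + h)
                                     * (kappa (w n) beta * y)))
  (hsign : (0 < h -> 0 < xs) /\ (h < 0 -> xs < 0) /\ (h = 0 -> xs = 0))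
  (s : config n) :
  condexpF (w n) beta h
     (fun s i b => Xn (w n) beta h xs s - Xn' (w n) beta h xs s i b) s
  = lambda R n * (Xn (w n) beta h xs s - cc (w n) beta h xs * tXn (w n) beta h xs s)
    + lambda R n * (R1 (w n) beta h xs s + R2 (w n) beta h xs s)
  /\
  condexpF (w n) beta h
     (fun s i b => tXn (w n) beta h xs s - tXn' (w n) beta h xs s i b) s
  = lambda R n * (0 * Xn (w n) beta h xs s
                + 1 / sigma2 (w n) beta h xs * tXn (w n) beta h xs s)
    + lambda R n * (tR1 (w n) beta h xs s + tR2 (w n) beta h xs s).
Proof.
have hn0 : n%:R != 0 :> R by rewrite pnatr_eq0 -lt0n.
have hn0' : 0 < n%:R :> R by rewrite ltr0n.
move: hfix hsign; set W := w n => hfix hsign.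
have hEW : 0 < EW W.
  rewrite /EW /EWn; apply: divr_gt0 => //.
  rewrite (bigD1 (Ordinal hn)) //=.
  have := hw.1 n (Ordinal hn).
  have : 0 <= \sum_(i < n | i != Ordinal hn) W i.
    by apply: sumr_ge0 => i _; exact: ltW (hw.1 n i).
  rewrite /W; lra.
have hE : EW W != 0 by rewrite gt_eqF.
have hb : 0 < beta.
  case: hU => [[hb0 hh]|[_ [hb _]]] //.
  rewrite lt_neqAle hb0 andbT; apply/negP => /eqP hb.
  have hx : xs = 0.
    rewrite hfix /kappa -hb mul0r sqrtr0 /EWn big1 ?mul0r // => i _.
    by rewrite !mul0r mulr0.
  move: hsign => [h1 [h2 _]].
  have := lt_total hh. case/orP => hh'.
    by move: (h2 hh'); rewrite hx ltxx.
  by move: (h1 hh'); rewrite hx ltxx.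
have hsn : Num.sqrt n%:R != 0 :> R by rewrite gt_eqF // sqrtr_gt0.
have hsq : Num.sqrt n%:R * Num.sqrt n%:R = n%:R :> R.
  by rewrite -expr2 sqr_sqrtr // ltW.
split.
- rewrite condexpF_E //.
  have e1 : forall i, \sum_(b : bool) condspin W beta h s i b * (Xn W beta h xs s - Xn' W beta h xs s i b)
     = (spin R (s i) - tanh (beta * W i / EW W * wmag_i W s i + h)) / (Num.sqrt n%:R * Num.sqrt (chin W beta h xs)).
    move=> i; rewrite -key // mulr_suml; apply: eq_bigr => b _; rewrite /Xn'; ring.
  under eq_bigr do rewrite e1.
  rewrite -mulr_suml sumrB /lambda /R1 /R2 /Xn /mag /Mn /EWn /Tn !sumrB.
  set S1 := \sum_(i < n) spin R (s i).
  set S2 := \sum_(i < n) tanh (beta * W i / EW W * wmag_i W s i + h).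
  set S3 := \sum_(i < n) tanh (kappa W beta * W i * xs + h).
  set S4 := \sum_(i < n) tanh (beta * W i / EW W * wmag W s + h).
  set r := Num.sqrt n%:R in hsq hsn *.
  rewrite !invfM.
  set z := (Num.sqrt (chin W beta h xs))^-1.
  clearbody S1 S2 S3 S4 r z.
  rewrite -hsq.
  field. by rewrite hsn.
- rewrite condexpF_E //.
  have e1 : forall i, \sum_(b : bool) condspin W beta h s i b * (tXn W beta h xs s - tXn' W beta h xs s i b)
     = W i * (spin R (s i) - tanh (beta * W i / EW W * wmag_i W s i + h)) / (Num.sqrt n%:R * Num.sqrt (tchin W beta h xs)).
    move=> i; rewrite -key // mulr_sumr mulr_suml; apply: eq_bigr => b _; rewrite /tXn'; ring.
  under eq_bigr do rewrite e1 mulrBr.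
  have hk2 : kappa W beta * kappa W beta = beta / EW W.
    by rewrite /kappa -expr2 sqr_sqrtr // divr_ge0 // ltW.
  have hk1 : Num.sqrt (EW W / beta) * kappa W beta = 1.
    rewrite /kappa -sqrtrM; last by rewrite divr_ge0 // ltW.
    have -> : EW W / beta * (beta / EW W) = 1 by field; rewrite hE gt_eqF.
    exact: sqrtr1.
  rewrite -mulr_suml sumrB /lambda /tR1 /tR2 derGn.
  have eS : \sum_(i < n) tanh (kappa W beta * W i * (kappa W beta * wmag W s) + h) * (kappa W beta * W i)
     = kappa W beta * \sum_(i < n) W i * tanh (beta * W i / EW W * wmag W s + h).
    rewrite mulr_sumr; apply: eq_bigr => i _.
    have -> : kappa W beta * W i * (kappa W beta * wmag W s) = beta * W i / EW W * wmag W s.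
      transitivity (kappa W beta * kappa W beta * W i * wmag W s); first by ring.
      rewrite hk2; ring.
    ring.
  rewrite eS.
  rewrite (_ : \sum_(i < n) W i * (tanh (beta * W i / EW W * wmag W s + h) - tanh (beta * W i / EW W * wmag_i W s i + h))
    = \sum_(i < n) W i * tanh (beta * W i / EW W * wmag W s + h) - \sum_(i < n) W i * tanh (beta * W i / EW W * wmag_i W s i + h)); last first.
    by rewrite -sumrB; apply: eq_bigr => i _; rewrite mulrBr.
  set S1 := \sum_(i < n) W i * spin R (s i).
  set S2 := \sum_(i < n) W i * tanh (beta * W i / EW W * wmag_i W s i + h).
  set S4 := \sum_(i < n) W i * tanh (beta * W i / EW W * wmag W s + h).
  have hm : wmag W s = S1 / n%:R by [].
  rewrite hm.
  have hk : kappa W beta != 0.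
    by apply/negP => /eqP hk0; move: hk1; rewrite hk0 mulr0 => /eqP; rewrite eq_sym oner_eq0.
  move: hk1 hk; set q := Num.sqrt (EW W / beta); set k := kappa W beta => hk1 hk.
  have hq : q = k^-1 by rewrite -[q](mulfK hk) hk1 mul1r.
  rewrite hq.
  set sg := 1 / sigma2 W beta h xs; clearbody sg.
  set r := Num.sqrt n%:R in hsq hsn *.
  rewrite !invfM.
  set z := (Num.sqrt (tchin W beta h xs))^-1.
  clearbody S1 S2 S4 r z k.
  rewrite -hsq.
  field. by rewrite hsn hk.
Qed.
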